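(* Let $f_0,g_0:\mathbb{R}^n\to[-\infty,\infty]$ be proper, let $h:\mathbb{R}^m\to\mathbb{R}$ be Lipschitz continuous with modulus $\kappa:\mathbb{R}_+\to\mathbb{R}_+$, and let $f_i,g_i:\mathbb{R}^n\to\mathbb{R}$, $i=1,\dots,m$, be Lipschitz continuous with common modulus $\lambda:\mathbb{R}_+\to\mathbb{R}_+$. Set $F=(f_1,\dots,f_m)$, $G=(g_1,\dots,g_m)$, $f=f_0+h\circ F$ and $g=g_0+h\circ G$. Fix $\rho\in\mathbb{R}_+$ and let $\bar\rho\ge\rho+\max\{\sup_{x\in\mathbb{B}_2(0,\rho)}|h(F(x))|,\ \sup_{x\in\mathbb{B}_2(0,\rho)}|h(G(x))|\}$, $\hat\rho>\rho+\hat d_{\bar\rho}(\mathrm{epi}\,f_0,\mathrm{epi}\,g_0)$, and $\rho^*\ge\max\{\sup_{x\in\mathbb{B}_2(0,\hat\rho)}\|F(x)\|_2,\ \sup_{x\in\mathbb{B}_2(0,\hat\rho)}\|G(x)\|_2\}$. Then $$\hat d_\rho(\mathrm{epi}\,f,\mathrm{epi}\,g)\le\big(1+\sqrt m\,\kappa(\rho^* )\lambda(\hat\rho)\big)\,\hat d_{\bar\rho}(\mathrm{epi}\,f_0,\mathrm{epi}\,g_0)+\kappa(\rho^* )\sup_{x\in\mathbb{B}_2(0,\rho)}\|F(x)-G(x)\|_2,$$ where all truncated Hausdorff distances are taken in $\mathbb{R}^{n+1}$ with the norm $\|(x,\alpha)\|=\max\{\|x\|_2,|\alpha|\}$.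
   Context: A function is proper if it never takes the value $-\infty$ and is finite somewhere. $\mathrm{epi}\,f=\{(x,\alpha)\in\mathbb{R}^n\times\mathbb{R}\mid f(x)\le\alpha\}$. $\mathbb{B}_2(0,r)=\{x\mid\|x\|_2\le r\}$. A function $\psi:\mathbb{R}^k\to\mathbb{R}$ is Lipschitz continuous with modulus $\kappa:\mathbb{R}_+\to\mathbb{R}_+$ if $|\psi(u)-\psi(\bar u)|\le\kappa(r)\|u-\bar u\|_2$ for all $r\in\mathbb{R}_+$ and all $u,\bar u\in\mathbb{B}_2(0,r)$. For a norm $\|\cdot\|$ on a Euclidean space, $\mathrm{dist}(x,D)=\inf_{d\in D}\|x-d\|$ (with $\mathrm{dist}(x,\emptyset)=\infty$), $\mathbb{B}(0,r)$ is the closed $\|\cdot\|$-ball, and the excess of $C$ over $D$ is $\mathrm{exs}(C;D)=\sup_{x\in C}\mathrm{dist}(x,D)$ if $C,D\neq\emptyset$, $=\infty$ if $C\neq\emptyset=D$, and $=0$ if $C=\emptyset$. The truncated Hausdorff distance is $\hat d_r(C,D)=\max\{\mathrm{exs}(C\cap\mathbb{B}(0,r);D),\ \mathrm{exs}(D\cap\mathbb{B}(0,r);C)\}$. *)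

(* Defs.v *)
From Stdlib Require Import Reals Lra ClassicalEpsilon.
From Stdlib Require Fin.
Open Scope R_scope.

Inductive Rbar : Type := Finite (r : R) | PInf | MInf.

Definition Rbar_le (x y : Rbar) : Prop :=
  match x, y with
  | MInf, _ => True
  | _, PInf => True
  | Finite a, Finite b => a <= b
  | _, _ => False
  end.
Definition Rbar_lt (x y : Rbar) : Prop := Rbar_le x y /\ x <> y.

(* addition; the ambiguous case +oo + -oo is never used below (set to +oo) *)
Definition Rbar_plus (x y : Rbar) : Rbar :=
  match x, y with
  | Finite a, Finite b => Finite (a + b)
  | PInf, _ | _, PInf => PInf
  | _, _ => MInf
  end.

Definition Rbar_max (x y : Rbar) : Rbar :=
  match excluded_middle_informative (Rbar_le x y) with
  | left _ => y | right _ => x end.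

(* multiplication of an extended real by a real scalar c, with 0 * (+-oo) = 0 *)
Definition Rbar_scal (c : R) (x : Rbar) : Rbar :=
  match x with
  | Finite a => Finite (c * a)
  | PInf => match Rlt_dec 0 c with left _ => PInf | right _ =>
              match Req_dec_T c 0 with left _ => Finite 0 | right _ => MInf end end
  | MInf => match Rlt_dec 0 c with left _ => MInf | right _ =>
              match Req_dec_T c 0 with left _ => Finite 0 | right _ => PInf end end
  end.

Definition Rbar_opp (x : Rbar) : Rbar :=
  match x with Finite a => Finite (- a) | PInf => MInf | MInf => PInf end.

(* supremum in [-oo,+oo] of a set of reals (sup of empty set = -oo) *)
Definition Rsup (E : R -> Prop) : Rbar :=
  match excluded_middle_informative (exists x, E x) with
  | left ne =>
      match excluded_middle_informative (bound E) with
      | left b => Finite (proj1_sig (completeness E b ne))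
      | right _ => PInf
      end
  | right _ => MInf
  end.

(* infimum of a set of reals (inf of empty set = +oo) *)
Definition Rinf (E : R -> Prop) : Rbar := Rbar_opp (Rsup (fun r => E (- r))).

Definition Rbar_sup (S : Rbar -> Prop) : Rbar :=
  match excluded_middle_informative (S PInf) with
  | left _ => PInf
  | right _ => Rsup (fun r => S (Finite r))
  end.

Definition vec (n : nat) : Type := Fin.t n -> R.

Fixpoint fin_sum (n : nat) : (Fin.t n -> R) -> R :=
  match n with
  | O => fun _ => 0
  | S k => fun f => f Fin.F1 + fin_sum k (fun i => f (Fin.FS i))
  end.

Definition norm2 {n : nat} (x : vec n) : R := sqrt (fin_sum n (fun i => x i ^ 2)).
Definition vsub {n : nat} (x y : vec n) : vec n := fun i => x i - y i.

Definition ball2 {n : nat} (r : R) (x : vec n) : Prop := norm2 x <= r.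

Definition sup_ball {n : nat} (r : R) (phi : vec n -> R) : Rbar :=
  Rsup (fun y => exists x : vec n, ball2 r x /\ y = phi x).

Definition lipschitz_mod {k : nat} (psi : vec k -> R) (kappa : R -> R) : Prop :=
  (forall r, 0 <= r -> 0 <= kappa r) /\
  (forall r, 0 <= r -> forall u ubar : vec k, ball2 r u -> ball2 r ubar ->
     Rabs (psi u - psi ubar) <= kappa r * norm2 (vsub u ubar)).

Definition proper {n : nat} (f : vec n -> Rbar) : Prop :=
  (forall x, f x <> MInf) /\ (exists x r, f x = Finite r).

Definition epi {n : nat} (f : vec n -> Rbar) (p : vec n * R) : Prop :=
  Rbar_le (f (fst p)) (Finite (snd p)).

Definition fplus {n : nat} (f0 : vec n -> Rbar) (phi : vec n -> R) : vec n -> Rbar :=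
  fun x => Rbar_plus (f0 x) (Finite (phi x)).

Definition pnorm {n : nat} (p : vec n * R) : R := Rmax (norm2 (fst p)) (Rabs (snd p)).
Definition psub {n : nat} (p q : vec n * R) : vec n * R :=
  (vsub (fst p) (fst q), snd p - snd q).
Definition pball {n : nat} (r : R) (p : vec n * R) : Prop := pnorm p <= r.

Definition dist {n : nat} (p : vec n * R) (D : vec n * R -> Prop) : Rbar :=
  Rinf (fun t => exists d, D d /\ t = pnorm (psub p d)).

Definition exs {n : nat} (C D : vec n * R -> Prop) : Rbar :=
  match excluded_middle_informative (exists c, C c) with
  | right _ => Finite 0
  | left _ =>
      match excluded_middle_informative (exists d, D d) with
      | right _ => PInf
      | left _ => Rbar_sup (fun t => exists c, C c /\ t = dist c D)
      end
  end.

Definition dhat {n : nat} (r : R) (C D : vec n * R -> Prop) : Rbar :=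
  Rbar_max (exs (fun p => C p /\ pball r p) D) (exs (fun p => D p /\ pball r p) C).

(* Main.v *)
Require Import Defs.
From Stdlib Require Import Reals Lra Psatz Classical ClassicalEpsilon.
Open Scope R_scope.

Lemma Rbar_le_trans a b c : Rbar_le a b -> Rbar_le b c -> Rbar_le a c.
Proof. destruct a, b, c; simpl; intros; try lra; tauto. Qed.

Lemma Rbar_le_total a b : Rbar_le a b \/ Rbar_le b a.
Proof. destruct a, b; simpl; auto. destruct (Rle_dec r r0); [left|right]; lra. Qed.

Lemma Rbar_max_l a b : Rbar_le a (Rbar_max a b).
Proof. unfold Rbar_max; destruct (excluded_middle_informative _); auto.
destruct a; simpl; lra || tauto. Qed.

Lemma Rbar_max_r a b : Rbar_le b (Rbar_max a b).
Proof. unfold Rbar_max; destruct (excluded_middle_informative _) as [H|H].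
destruct b; simpl; lra || tauto. destruct (Rbar_le_total a b); tauto. Qed.

Lemma Rbar_max_le a b c : Rbar_le a c -> Rbar_le b c -> Rbar_le (Rbar_max a b) c.
Proof. unfold Rbar_max; destruct (excluded_middle_informative _); auto. Qed.

Lemma Rsup_ub (E : R -> Prop) y : E y -> Rbar_le (Finite y) (Rsup E).
Proof. intro Hy. unfold Rsup. destruct (excluded_middle_informative _) as [ne|nne];
 [|exfalso; eauto]. destruct (excluded_middle_informative (bound E)) as [b|nb]; simpl; [|exact I].
 simpl. destruct (proj2_sig (completeness E b ne)) as [Hub _]. apply Hub; auto. Qed.

Lemma Rsup_le (E : R -> Prop) b : (forall y, E y -> y <= b) -> Rbar_le (Rsup E) (Finite b).
Proof. intro H. unfold Rsup. destruct (excluded_middle_informative _) as [ne|nne]; [|simpl; exact I].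
 destruct (excluded_middle_informative (bound E)) as [bd|nb].
 simpl. destruct (proj2_sig (completeness E bd ne)) as [_ Hl]. apply Hl. intros y Hy; auto.
 exfalso; apply nb; exists b; intros y Hy; auto. Qed.

Lemma Rsup_fin (E : R -> Prop) b : (exists y, E y) -> (forall y, E y -> y <= b) ->
  exists s, Rsup E = Finite s /\ s <= b.
Proof. intros ne H. unfold Rsup. destruct (excluded_middle_informative _) as [ne'|nne]; [|tauto].
 destruct (excluded_middle_informative (bound E)) as [bd|nb].
 simpl. destruct (proj2_sig (completeness E bd ne')) as [_ Hl]. eexists; split; [reflexivity|]. apply Hl. intros y Hy; auto.
 exfalso; apply nb; exists b; intros y Hy; auto. Qed.

Lemma Rinf_le (E : R -> Prop) K : (forall eps, 0 < eps -> exists y, E y /\ y <= K + eps) ->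
  Rbar_le (Rinf E) (Finite K).
Proof. intro H. unfold Rinf. destruct (Rsup (fun r => E (- r))) eqn:HS; simpl.
 - destruct (Rle_dec (-r) K) as [|Hn]; auto. exfalso.
   destruct (H ((-K - r)/2)) as [y [Hy Hy2]]. lra.
   assert (Rbar_le (Finite (-y)) (Rsup (fun r => E (- r)))) as Hb.
   { apply Rsup_ub. rewrite Ropp_involutive; auto. }
   rewrite HS in Hb; simpl in Hb. lra.
 - exact I.
 - destruct (H 1) as [y [Hy _]]. lra.
   assert (Rbar_le (Finite (-y)) (Rsup (fun r => E (- r)))) as Hb.
   { apply Rsup_ub. rewrite Ropp_involutive; auto. }
   rewrite HS in Hb; simpl in Hb. auto.
Qed.

Lemma Rinf_approx (E : R -> Prop) b eps : Rbar_le (Rinf E) (Finite b) -> 0 < eps ->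
  exists y, E y /\ y < b + eps.
Proof. intros H He. apply NNPP; intro Hn.
 assert (Hb : Rbar_le (Rsup (fun r => E (- r))) (Finite (-(b+eps)))).
 { apply Rsup_le. intros z Hz. destruct (Rle_dec z (-(b+eps))) as [|Hz2]; auto.
   exfalso; apply Hn; exists (-z); split; auto; lra. }
 unfold Rinf in H. destruct (Rsup (fun r => E (- r))); simpl in *; lra || tauto.
Qed.

Lemma Rinf_fin (E : R -> Prop) : (exists y, E y) -> (forall y, E y -> 0 <= y) ->
  exists r, Rinf E = Finite r /\ 0 <= r.
Proof. intros [y Hy] H. destruct (Rsup_fin (fun r => E (- r)) 0) as [s [Hs Hs0]].
 exists (-y); rewrite Ropp_involutive; auto.
 intros z Hz; specialize (H _ Hz); lra.
 exists (-s); unfold Rinf; rewrite Hs; simpl; split; auto; lra. Qed.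

Lemma pnorm_nonneg {n} (p : vec n * R) : 0 <= pnorm p.
Proof. unfold pnorm. eapply Rle_trans; [apply Rabs_pos|apply Rmax_r]. Qed.

Lemma dist_fin {n} (c : vec n * R) (D : vec n * R -> Prop) : (exists d, D d) -> exists r, Defs.dist c D = Finite r /\ 0 <= r.
Proof. intros [d Hd]. apply Rinf_fin. exists (pnorm (psub c d)); eauto.
 intros y [d' [_ ->]]; apply pnorm_nonneg. Qed.

Lemma dist_le {n} (c : vec n * R) (D : vec n * R -> Prop) K :
  (forall eps, 0 < eps -> exists d, D d /\ pnorm (psub c d) <= K + eps) ->
  Rbar_le (Defs.dist c D) (Finite K).
Proof. intro H. unfold Defs.dist; apply Rinf_le; intros eps He.
 destruct (H eps He) as [d [Hd Hn]]. exists (pnorm (psub c d)); split; eauto. Qed.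

Lemma exs_nonneg {n} (C D : vec n * R -> Prop) : Rbar_le (Finite 0) (exs C D).
Proof. unfold exs. destruct (excluded_middle_informative _) as [[c Hc]|]; [|simpl; lra].
 destruct (excluded_middle_informative _) as [[d Hd]|]; [|exact I].
 unfold Rbar_sup. destruct (excluded_middle_informative _); [exact I|].
 destruct (dist_fin c D) as [r [Hr Hr0]]; eauto.
 eapply Rbar_le_trans; [|apply Rsup_ub with (y := r); exists c; split; eauto].
 simpl; auto. Qed.

Lemma exs_le {n} (C D : vec n * R -> Prop) K : 0 <= K ->
  (forall c, C c -> forall eps, 0 < eps -> exists d, D d /\ pnorm (psub c d) <= K + eps) ->
  Rbar_le (exs C D) (Finite K).
Proof. intros HK H. unfold exs. destruct (excluded_middle_informative _) as [[c Hc]|]; [|simpl; auto].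
 destruct (excluded_middle_informative _) as [[d Hd]|nD].
 - unfold Rbar_sup. destruct (excluded_middle_informative _) as [[c' [Hc' HP]]|HnP].
   + pose proof (dist_le c' D K (H c' Hc')) as Hl. rewrite <- HP in Hl. exact Hl.
   + apply Rsup_le. intros y [c' [Hc' Hy]]. pose proof (dist_le c' D K (H c' Hc')) as Hl.
     rewrite <- Hy in Hl; exact Hl.
 - destruct (H c Hc 1 Rlt_0_1) as [d [Hd _]]. exfalso; eauto.
Qed.

Lemma exs_approx {n} (C D : vec n * R -> Prop) e c : Rbar_le (exs C D) (Finite e) -> C c ->
  forall eps, 0 < eps -> exists d, D d /\ pnorm (psub c d) < e + eps.
Proof. intros H Hc eps He. unfold exs in H.
 destruct (excluded_middle_informative _) as [ne|nne]; [|exfalso; eauto].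
 destruct (excluded_middle_informative _) as [[d0 Hd0]|nD]; [|simpl in H; contradiction].
 unfold Rbar_sup in H. destruct (excluded_middle_informative _) as [HP|HnP]; [simpl in H; contradiction|].
 destruct (dist_fin c D) as [r [Hr _]]; eauto.
 assert (Hre : r <= e).
 { assert (Rbar_le (Finite r) (Rsup (fun r0 => exists c0, C c0 /\ Finite r0 = Defs.dist c0 D))) as Hb.
   { apply Rsup_ub. exists c; split; auto. }
   pose proof (Rbar_le_trans _ _ _ Hb H) as Hb2; simpl in Hb2; auto. }
 assert (Hd : Rbar_le (Defs.dist c D) (Finite r)) by (rewrite Hr; simpl; lra).
 unfold Defs.dist in Hd. destruct (Rinf_approx _ _ _ Hd He) as [y [[d [Hd' ->]] Hy]].
 exists d; split; auto; lra.
Qed.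
Lemma fin_sum_ext n (f g : Fin.t n -> R) : (forall i, f i = g i) -> fin_sum n f = fin_sum n g.
Proof. revert f g; induction n; intros f g H; simpl; auto.
 rewrite H, (IHn (fun i => f (Fin.FS i)) (fun i => g (Fin.FS i))); auto. Qed.

Lemma fin_sum_le n (f g : Fin.t n -> R) : (forall i, f i <= g i) -> fin_sum n f <= fin_sum n g.
Proof. revert f g; induction n; intros f g H; simpl; [lra|].
 pose proof (H Fin.F1). pose proof (IHn (fun i => f (Fin.FS i)) (fun i => g (Fin.FS i)) (fun i => H _)). lra. Qed.

Lemma fin_sum_const n c : fin_sum n (fun _ => c) = INR n * c.
Proof. induction n; simpl fin_sum; [simpl; lra|]. rewrite IHn, S_INR; ring. Qed.

Lemma fin_sum_add n (f g : Fin.t n -> R) : fin_sum n (fun i => f i + g i) = fin_sum n f + fin_sum n g.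
Proof. revert f g; induction n; intros f g; simpl; [lra|].
 rewrite (IHn (fun i => f (Fin.FS i)) (fun i => g (Fin.FS i))); ring. Qed.

Lemma fin_sum_scal n c (f : Fin.t n -> R) : fin_sum n (fun i => c * f i) = c * fin_sum n f.
Proof. revert f; induction n; intros f; simpl; [lra|].
 rewrite (IHn (fun i => f (Fin.FS i))); ring. Qed.

Lemma fin_sum_nonneg n (f : Fin.t n -> R) : (forall i, 0 <= f i) -> 0 <= fin_sum n f.
Proof. intro H. rewrite <- (Rmult_0_r (INR n)), <- fin_sum_const. apply fin_sum_le; auto. Qed.

Lemma cs n (a b : Fin.t n -> R) :
  fin_sum n (fun i => a i * b i) <= sqrt (fin_sum n (fun i => a i ^ 2)) * sqrt (fin_sum n (fun i => b i ^ 2)).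
Proof. revert a b; induction n; intros a b; cbn [fin_sum].
 - rewrite sqrt_0; lra.
 - specialize (IHn (fun i => a (Fin.FS i)) (fun i => b (Fin.FS i))).
   set (A := fin_sum n (fun i => a (Fin.FS i) ^ 2)) in *.
   set (C := fin_sum n (fun i => b (Fin.FS i) ^ 2)) in *.
   assert (HA : 0 <= A) by (apply fin_sum_nonneg; intros; apply pow2_ge_0).
   assert (HC : 0 <= C) by (apply fin_sum_nonneg; intros; apply pow2_ge_0).
   set (u := sqrt A). set (v := sqrt C).
   assert (Hu : A = u ^ 2) by (unfold u; simpl; rewrite Rmult_1_r, sqrt_sqrt; auto).
   assert (Hv : C = v ^ 2) by (unfold v; simpl; rewrite Rmult_1_r, sqrt_sqrt; auto).
   set (a0 := a Fin.F1) in *. set (b0 := b Fin.F1) in *.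
   apply Rle_trans with (a0 * b0 + u * v); [unfold u, v; lra|].
   rewrite Hu, Hv, <- sqrt_mult by (apply Rplus_le_le_0_compat; apply pow2_ge_0).
   apply Rle_trans with (Rabs (a0 * b0 + u * v)); [apply Rle_abs|].
   rewrite <- sqrt_Rsqr_abs. apply sqrt_le_1_alt. unfold Rsqr.
   assert (0 <= (a0 * v - u * b0) ^ 2) by apply pow2_ge_0. nra.
Qed.

Lemma norm2_nonneg {n} (x : vec n) : 0 <= norm2 x.
Proof. apply sqrt_pos. Qed.

Lemma norm2_ext {n} (x y : vec n) : (forall i, x i = y i) -> norm2 x = norm2 y.
Proof. intro H; unfold norm2; f_equal; apply fin_sum_ext; intro i; rewrite H; auto. Qed.

Lemma norm2_plus {n} (a b : vec n) : norm2 (fun i => a i + b i) <= norm2 a + norm2 b.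
Proof. unfold norm2.
 set (A := fin_sum n (fun i => a i ^ 2)). set (C := fin_sum n (fun i => b i ^ 2)).
 assert (HA : 0 <= A) by (apply fin_sum_nonneg; intros; apply pow2_ge_0).
 assert (HC : 0 <= C) by (apply fin_sum_nonneg; intros; apply pow2_ge_0).
 assert (E : fin_sum n (fun i => (a i + b i) ^ 2) = A + 2 * fin_sum n (fun i => a i * b i) + C).
 { unfold A, C. rewrite <- fin_sum_scal, <- !fin_sum_add. apply fin_sum_ext; intro; ring. }
 rewrite E. pose proof (cs n a b) as Hcs. fold A C in Hcs.
 pose proof (sqrt_pos A). pose proof (sqrt_pos C).
 rewrite <- (sqrt_pow2 (sqrt A + sqrt C)) by lra. apply sqrt_le_1_alt.
 pose proof (sqrt_sqrt A HA). pose proof (sqrt_sqrt C HC). nra.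
Qed.

Lemma norm2_opp {n} (a : vec n) : norm2 (fun i => - a i) = norm2 a.
Proof. unfold norm2; f_equal; apply fin_sum_ext; intro; ring. Qed.

Lemma norm2_vsub_sym {n} (a b : vec n) : norm2 (vsub a b) = norm2 (vsub b a).
Proof. rewrite <- norm2_opp. apply norm2_ext; intro; unfold vsub; ring. Qed.

Lemma norm2_vsub_tri {n} (a b c : vec n) : norm2 (vsub a c) <= norm2 (vsub a b) + norm2 (vsub b c).
Proof. rewrite (norm2_ext (vsub a c) (fun i => vsub a b i + vsub b c i)) by (intro; unfold vsub; ring).
 apply norm2_plus. Qed.

Lemma norm2_shift {n} (x y : vec n) : norm2 y <= norm2 x + norm2 (vsub x y).
Proof. rewrite (norm2_ext y (fun i => x i + - vsub x y i)) by (intro; unfold vsub; ring).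
 eapply Rle_trans; [apply norm2_plus|]. rewrite norm2_opp; lra. Qed.

Lemma norm2_comp {m} (v : vec m) t : 0 <= t -> (forall i, Rabs (v i) <= t) -> norm2 v <= sqrt (INR m) * t.
Proof. intros Ht H. unfold norm2.
 apply Rle_trans with (sqrt (INR m * t ^ 2)).
 - apply sqrt_le_1_alt. rewrite <- fin_sum_const. apply fin_sum_le. intro i.
   rewrite <- pow2_abs. pose proof (H i); pose proof (Rabs_pos (v i)). nra.
 - rewrite sqrt_mult, sqrt_pow2 by (auto using pos_INR, pow2_ge_0). lra.
Qed.

Lemma norm2_zero {n} : norm2 (fun _ : Fin.t n => 0) = 0.
Proof. unfold norm2. rewrite (fin_sum_ext _ _ (fun _ => 0)) by (intro; ring).
 rewrite fin_sum_const, Rmult_0_r; apply sqrt_0. Qed.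

Lemma abs_sub_le a b : Rabs (a - b) <= Rabs a + Rabs b.
Proof. unfold Rabs; repeat destruct Rcase_abs; lra. Qed.

Lemma core n m (f0 g0 : vec n -> Rbar) (h : vec m -> R) (F G : vec n -> vec m)
 (rho rhobar rhohat rhostar k l e s : R)
 (Hf0 : forall x, f0 x <> MInf) (Hg0 : forall x, g0 x <> MInf)
 (Hrho : 0 <= rho) (He : 0 <= e) (Hk : 0 <= k) (Hl : 0 <= l) (Hs : 0 <= s)
 (Hhat : rho + e < rhohat)
 (Hbar : forall x, ball2 rho x -> rho + Rabs (h (F x)) <= rhobar)
 (Hex : Rbar_le (exs (fun p => epi f0 p /\ pball rhobar p) (epi g0)) (Finite e))
 (HFs : forall x, ball2 rhohat x -> norm2 (F x) <= rhostar)
 (HGs : forall x, ball2 rhohat x -> norm2 (G x) <= rhostar)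
 (Hh : forall u v, ball2 rhostar u -> ball2 rhostar v -> Rabs (h u - h v) <= k * norm2 (vsub u v))
 (HG : forall i x y, ball2 rhohat x -> ball2 rhohat y -> Rabs (G x i - G y i) <= l * norm2 (vsub x y))
 (HFG : forall x, ball2 rho x -> norm2 (vsub (F x) (G x)) <= s) :
 Rbar_le (exs (fun p => epi (fplus f0 (fun x => h (F x))) p /\ pball rho p)
              (epi (fplus g0 (fun x => h (G x)))))
         (Finite ((1 + sqrt (INR m) * k * l) * e + k * s)).
Proof.
 set (q := sqrt (INR m)). assert (Hq : 0 <= q) by apply sqrt_pos.
 set (c := 1 + q * k * l).
 assert (Hc : 1 <= c) by (unfold c; pose proof (Rmult_le_pos _ _ (Rmult_le_pos _ _ Hq Hk) Hl); lra).
 apply exs_le. { pose proof (Rmult_le_pos _ _ Hk Hs). nra. }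
 intros [x a] [Hepi Hball] eps Heps.
 unfold pball, pnorm in Hball; simpl in Hball.
 assert (Hx : norm2 x <= rho) by (eapply Rle_trans; [apply Rmax_l|exact Hball]).
 assert (Ha : Rabs a <= rho) by (eapply Rle_trans; [apply Rmax_r|exact Hball]).
 unfold epi, fplus in Hepi; simpl in Hepi.
 destruct (f0 x) as [r| |] eqn:Hf0x; simpl in Hepi; [| contradiction | exfalso; eapply Hf0; eauto].
 set (a0 := a - h (F x)).
 pose proof (Hbar x Hx) as Hb. pose proof (Rabs_pos (h (F x))) as Habs.
 assert (Hc0 : epi f0 (x, a0) /\ pball rhobar (x, a0)).
 { split. unfold epi; simpl; rewrite Hf0x; simpl; unfold a0; lra.
   unfold pball, pnorm; simpl; apply Rmax_lub; [lra|]. unfold a0.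
   pose proof (abs_sub_le a (h (F x))); lra. }
 set (eps' := Rmin (eps / c) ((rhohat - rho - e) / 2)).
 assert (Heps' : 0 < eps').
 { apply Rmin_pos; [|lra]. unfold Rdiv; apply Rmult_lt_0_compat; [lra|apply Rinv_0_lt_compat; lra]. }
 assert (Hce : c * eps' <= eps).
 { apply Rle_trans with (c * (eps / c)). apply Rmult_le_compat_l; [lra|apply Rmin_l].
   right; field; lra. }
 assert (He2 : eps' <= (rhohat - rho - e) / 2) by apply Rmin_r.
 destruct (exs_approx _ _ _ _ Hex Hc0 eps' Heps') as [[y b] [Hyb Hd]].
 unfold pnorm, psub in Hd; simpl in Hd.
 assert (Hxy : norm2 (vsub x y) < e + eps') by (eapply Rle_lt_trans; [apply Rmax_l|exact Hd]).
 assert (Hab : Rabs (a0 - b) < e + eps') by (eapply Rle_lt_trans; [apply Rmax_r|exact Hd]).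
 unfold epi in Hyb; simpl in Hyb.
 destruct (g0 y) as [r0| |] eqn:Hg0y; simpl in Hyb; [| contradiction | exfalso; eapply Hg0; eauto].
 exists (y, b + h (G y)). split.
 { unfold epi, fplus; simpl; rewrite Hg0y; simpl; lra. }
 unfold pnorm, psub; simpl.
 assert (Hee : eps' <= eps) by nra.
 assert (Hce2 : e <= c * e) by nra.
 pose proof (Rmult_le_pos _ _ Hk Hs).
 apply Rmax_lub; [lra|].
 assert (Hy : ball2 rhohat y).
 { unfold ball2. pose proof (norm2_shift x y). lra. }
 assert (Hx' : ball2 rhohat x) by (unfold ball2; lra).
 assert (HhFG : Rabs (h (F x) - h (G y)) <= k * norm2 (vsub (F x) (G y)))
   by (apply Hh; unfold ball2; auto).
 pose proof (norm2_vsub_tri (F x) (G x) (G y)) as Htri.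
 assert (HGxy : norm2 (vsub (G x) (G y)) <= q * (l * norm2 (vsub x y))).
 { apply norm2_comp. apply Rmult_le_pos; auto using norm2_nonneg.
   intro i; unfold vsub; apply HG; auto. }
 pose proof (HFG x Hx) as HFGx.
 assert (Hn : norm2 (vsub (F x) (G y)) <= s + q * (l * (e + eps'))).
 { assert (q * (l * norm2 (vsub x y)) <= q * (l * (e + eps'))).
   { apply Rmult_le_compat_l; auto. apply Rmult_le_compat_l; auto; lra. }
   lra. }
 assert (Hk2 : k * norm2 (vsub (F x) (G y)) <= k * (s + q * (l * (e + eps'))))
   by (apply Rmult_le_compat_l; auto).
 assert (Habs2 : Rabs (a - (b + h (G y))) <= Rabs (a0 - b) + Rabs (h (F x) - h (G y))).
 { unfold a0, Rabs; repeat destruct Rcase_abs; lra. }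
 unfold c in Hce, Hce2 |- *. nra.
Qed.

Lemma plus_max_bound rho rb M t : Rbar_le (Rbar_plus (Finite rho) M) (Finite rb) ->
  Rbar_le (Finite t) M -> rho + t <= rb.
Proof. destruct M; simpl; intros; lra || tauto. Qed.

Lemma max_bound M r t : Rbar_le M (Finite r) -> Rbar_le (Finite t) M -> t <= r.
Proof. intros H1 H2. pose proof (Rbar_le_trans _ _ _ H2 H1); simpl in *; auto. Qed.

Lemma sup_ball_ub {n} r (phi : vec n -> R) x : ball2 r x -> Rbar_le (Finite (phi x)) (sup_ball r phi).
Proof. intro H; apply Rsup_ub; eauto. Qed.

Theorem mainTheorem14 (n m : nat)
  (f0 g0 : vec n -> Rbar) (h : vec m -> R) (kappa lambda : R -> R)
  (F G : vec n -> vec m)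
  (Hf0 : proper f0) (Hg0 : proper g0)
  (Hh : lipschitz_mod h kappa)
  (HF : forall i : Fin.t m, lipschitz_mod (fun x => F x i) lambda)
  (HG : forall i : Fin.t m, lipschitz_mod (fun x => G x i) lambda)
  (rho rhobar rhohat rhostar : R)
  (Hrho : 0 <= rho)
  (Hrhobar : Rbar_le
     (Rbar_plus (Finite rho)
        (Rbar_max (sup_ball rho (fun x => Rabs (h (F x))))
                  (sup_ball rho (fun x => Rabs (h (G x))))))
     (Finite rhobar))
  (Hrhohat : Rbar_lt (Rbar_plus (Finite rho) (dhat rhobar (epi f0) (epi g0))) (Finite rhohat))
  (Hrhostar : Rbar_le
     (Rbar_max (sup_ball rhohat (fun x => norm2 (F x)))
               (sup_ball rhohat (fun x => norm2 (G x))))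
     (Finite rhostar)) :
  Rbar_le
    (dhat rho (epi (fplus f0 (fun x => h (F x)))) (epi (fplus g0 (fun x => h (G x)))))
    (Rbar_plus
       (Rbar_scal (1 + sqrt (INR m) * kappa rhostar * lambda rhohat)
          (dhat rhobar (epi f0) (epi g0)))
       (Rbar_scal (kappa rhostar) (sup_ball rho (fun x => norm2 (vsub (F x) (G x)))))).
Proof.
 destruct Hf0 as [Hf0 _]. destruct Hg0 as [Hg0 _].
 assert (Heta0 : Rbar_le (Finite 0) (dhat rhobar (epi f0) (epi g0))).
 { unfold dhat. apply Rbar_le_trans with (exs (fun p => epi f0 p /\ pball rhobar p) (epi g0)); [apply exs_nonneg|apply Rbar_max_l]. }
 assert (Hmax1 : Rbar_le (exs (fun p => epi f0 p /\ pball rhobar p) (epi g0)) (dhat rhobar (epi f0) (epi g0)))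
   by apply Rbar_max_l.
 assert (Hmax2 : Rbar_le (exs (fun p => epi g0 p /\ pball rhobar p) (epi f0)) (dhat rhobar (epi f0) (epi g0)))
   by apply Rbar_max_r.
 destruct (dhat rhobar (epi f0) (epi g0)) as [e| |] eqn:Heta;
   simpl in Heta0, Hrhohat; [| destruct Hrhohat; contradiction | contradiction].
 destruct Hrhohat as [Hr1 Hr2].
 assert (Hhat : rho + e < rhohat).
 { destruct Hr1; auto. exfalso; apply Hr2; congruence. }
 set (z := fun _ : Fin.t n => 0).
 assert (Hz : forall r, 0 <= r -> ball2 r z) by (intros; unfold ball2, z; rewrite norm2_zero; auto).
 assert (HbarF : forall x, ball2 rho x -> rho + Rabs (h (F x)) <= rhobar).
 { intros x Hx. eapply plus_max_bound; [exact Hrhobar|].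
   eapply Rbar_le_trans; [apply (sup_ball_ub _ (fun x => Rabs (h (F x))) x Hx)|apply Rbar_max_l]. }
 assert (HbarG : forall x, ball2 rho x -> rho + Rabs (h (G x)) <= rhobar).
 { intros x Hx. eapply plus_max_bound; [exact Hrhobar|].
   eapply Rbar_le_trans; [apply (sup_ball_ub _ (fun x => Rabs (h (G x))) x Hx)|apply Rbar_max_r]. }
 assert (HFs : forall x, ball2 rhohat x -> norm2 (F x) <= rhostar).
 { intros x Hx. eapply max_bound; [exact Hrhostar|].
   eapply Rbar_le_trans; [apply (sup_ball_ub _ (fun x => norm2 (F x)) x Hx)|apply Rbar_max_l]. }
 assert (HGs : forall x, ball2 rhohat x -> norm2 (G x) <= rhostar).
 { intros x Hx. eapply max_bound; [exact Hrhostar|].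
   eapply Rbar_le_trans; [apply (sup_ball_ub _ (fun x => norm2 (G x)) x Hx)|apply Rbar_max_r]. }
 assert (Hrs : 0 <= rhostar).
 { eapply Rle_trans; [apply (norm2_nonneg (F z))|apply (HFs z)]. apply Hz; lra. }
 assert (Hrh : 0 <= rhohat) by lra.
 destruct Hh as [Hk Hh]. pose proof (Hk _ Hrs) as Hk0.
 assert (HS : exists s, sup_ball rho (fun x => norm2 (vsub (F x) (G x))) = Finite s /\ 0 <= s).
 { destruct (Rsup_fin (fun y => exists x : vec n, ball2 rho x /\ y = norm2 (vsub (F x) (G x))) (rhostar + rhostar))
     as [s [Hs _]].
   - exists (norm2 (vsub (F z) (G z))); exists z; split; auto.
   - intros y [x [Hx ->]]. eapply Rle_trans; [apply (norm2_vsub_tri _ (fun _ => 0))|].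
     assert (Hx' : ball2 rhohat x) by (unfold ball2 in *; lra).
     rewrite (norm2_ext (vsub (F x) (fun _ => 0)) (F x)) by (intro; unfold vsub; ring).
     rewrite (norm2_ext (vsub (fun _ => 0) (G x)) (fun i => - G x i)) by (intro; unfold vsub; ring).
     rewrite norm2_opp. pose proof (HFs x Hx'); pose proof (HGs x Hx'); lra.
   - exists s; split; auto.
     pose proof (sup_ball_ub rho (fun x => norm2 (vsub (F x) (G x))) z (Hz _ Hrho)) as H0.
     unfold sup_ball in H0; rewrite Hs in H0; simpl in H0. pose proof (norm2_nonneg (vsub (F z) (G z))); lra. }
 destruct HS as [s [HS Hs0]]. rewrite HS.
 assert (HFG : forall x, ball2 rho x -> norm2 (vsub (F x) (G x)) <= s).
 { intros x Hx. pose proof (sup_ball_ub rho (fun x => norm2 (vsub (F x) (G x))) x Hx) as H0.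
   rewrite HS in H0; exact H0. }
 assert (HGF : forall x, ball2 rho x -> norm2 (vsub (G x) (F x)) <= s).
 { intros x Hx. rewrite norm2_vsub_sym; auto. }
 assert (Hh' : forall u v, ball2 rhostar u -> ball2 rhostar v ->
           Rabs (h u - h v) <= kappa rhostar * norm2 (vsub u v)) by (intros; apply Hh; auto).
 destruct m as [|m'].
 -
   replace (sqrt (INR 0) * kappa rhostar * lambda rhohat) with (sqrt (INR 0) * kappa rhostar * 0)
     by (simpl; rewrite sqrt_0; ring).
   assert (HGl : forall (K : vec n -> vec 0) i x y, ball2 rhohat x -> ball2 rhohat y ->
              Rabs (K x i - K y i) <= 0 * norm2 (vsub x y)) by (intros K i; apply Fin.case0; exact i).
   simpl Rbar_scal. simpl Rbar_plus. unfold dhat; apply Rbar_max_le.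
   + apply (core n 0 f0 g0 h F G rho rhobar rhohat rhostar (kappa rhostar) 0 e s); auto; lra.
   + apply (core n 0 g0 f0 h G F rho rhobar rhohat rhostar (kappa rhostar) 0 e s); auto; lra.
 - assert (Hl0 : 0 <= lambda rhohat) by (destruct (HG Fin.F1) as [Hl _]; auto).
   assert (HGl : forall i x y, ball2 rhohat x -> ball2 rhohat y ->
       Rabs (G x i - G y i) <= lambda rhohat * norm2 (vsub x y)) by (intros; apply (HG i); auto).
   assert (HFl : forall i x y, ball2 rhohat x -> ball2 rhohat y ->
       Rabs (F x i - F y i) <= lambda rhohat * norm2 (vsub x y)) by (intros; apply (HF i); auto).
   simpl Rbar_scal. simpl Rbar_plus. unfold dhat; apply Rbar_max_le.
   + apply (core n (S m') f0 g0 h F G rho rhobar rhohat rhostar (kappa rhostar) (lambda rhohat) e s); auto.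
   + apply (core n (S m') g0 f0 h G F rho rhobar rhohat rhostar (kappa rhostar) (lambda rhohat) e s); auto.
Qed.
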